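(* The behaviour bifunctor $B^{\mathsf p}$ of \textbf{xPTCL} has a locally final coalgebra $z\colon Z\to B^{\mathsf p}(Z,Z)$, unique up to isomorphism. Moreover, there is a $\Sigma^{\mathsf p}$-algebra structure $a$ on $Z$ such that $(Z,a,z)$ is a $\rho^{\mathsf p}$-bialgebra, and it is adequate for strong probabilistic applicative bisimilarity: if $\llbracket-\rrbracket\colon\mu\Sigma^{\mathsf p}\to Z$ is the unique $\Sigma^{\mathsf p}$-algebra morphism, then for all $\tau$ and $p,q\in\mu\Sigma^{\mathsf p}_\tau$, $\llbracket p\rrbracket_\tau=\llbracket q\rrbracket_\tau$ implies $p\sim^{\mathsf p}_\tau q$.
   Context: Types: $\tau::=\mathsf{unit}\mid\tau\to\tau$. $\Sigma^{\mathsf p}$ is the $\mathsf{Ty}$-sorted signature containing, for all types, $\mathsf{e}\colon\mathsf{unit}$; application $\mathsf{app}_{\tau_1,\tau_2}\colon(\tau_1\to\tau_2)\times\tau_1\to\tau_2$ (written $s\,t$); constants $S_{\tau_1,\tau_2,\tau_3}\colon(\tau_1\to\tau_2\to\tau_3)\to(\tau_1\to\tau_2)\to\tau_1\to\tau_3$, $K_{\tau_1,\tau_2}\colon\tau_1\to\tau_2\to\tau_1$, $I_\tau\colon\tau\to\tau$; unary/binary $S'\colon(\tau_1\to\tau_2\to\tau_3)\to((\tau_1\to\tau_2)\to\tau_1\to\tau_3)$, $S''\colon(\tau_1\to\tau_2\to\tau_3)\times(\tau_1\to\tau_2)\to(\tau_1\to\tau_3)$, $K'\colon\tau_1\to(\tau_2\to\tau_1)$;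 and $\oplus_\tau\colon\tau\times\tau\to\tau$. $\mu\Sigma^{\mathsf p}$ is the sorted set of closed terms, $(\Sigma^{\mathsf p})^\star$ the free-term monad. $\mathcal{D}_\omega$ is the finite distribution functor on $\mathbf{Set}$. $B^{\mathsf p}\colon(\mathbf{Set}^{\mathsf{Ty}})^{op}\times\mathbf{Set}^{\mathsf{Ty}}\to\mathbf{Set}^{\mathsf{Ty}}$: $B^{\mathsf p}_{\mathsf{unit}}(X,Y)=\mathcal{D}_\omega(Y_{\mathsf{unit}})+1$, $B^{\mathsf p}_{\tau_1\to\tau_2}(X,Y)=\mathcal{D}_\omega(Y_{\tau_1\to\tau_2})+Y_{\tau_2}^{X_{\tau_1}}$. A higher-order coalgebra $c\colon C\to B^{\mathsf p}(C,C)$ is locally final if it is a final coalgebra for $B^{\mathsf p}(C,-)$. The higher-order GSOS law $\rho^{\mathsf p}_{X,Y}\colon\Sigma^{\mathsf p}(X\times B^{\mathsf p}(X,Y))\to B^{\mathsf p}(X,(\Sigma^{\mathsf p})^\star(X+Y))$ (injections, units implicit) is: $\mathsf{e}\mapsto *$; $S\mapsto\lambda t.S'(t)$; $S'(p,\_)\mapsto\lambda t.S''(p,t)$; $S''((p,\_),(q,\_))\mapsto\lambda t.(p\,t)(q\,t)$; $K\mapsto\lambda t.K'(t)$; $K'(p,\_)\mapsto\lambda t.p$; $I\mapsto\lambda t.t$; $(p,\_)\oplus_\tau(q,\_)\mapsto\tfrac12 p+\tfrac12 q$; $\mathsf{app}((p,\sum_ir_i\cdot p_i),(q,\_))\mapsto\sum_ir_i\cdot\mathsf{app}(p_i,q)$;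 $\mathsf{app}((p,f),(q,\_))\mapsto f(q)$ (as a Dirac distribution) for $f\in Y_{\tau_2}^{X_{\tau_1}}$. A $\rho^{\mathsf p}$-bialgebra is $(X,a,c)$ with $c\cdot a=B^{\mathsf p}(\mathrm{id},\hat a\cdot(\Sigma^{\mathsf p})^\star\nabla)\cdot\rho^{\mathsf p}_{X,X}\cdot\Sigma^{\mathsf p}\langle\mathrm{id},c\rangle$, $\hat a$ term evaluation. The operational model $\gamma^{\mathsf p}\colon\mu\Sigma^{\mathsf p}\to B^{\mathsf p}(\mu\Sigma^{\mathsf p},\mu\Sigma^{\mathsf p})$ is the unique map with $\gamma^{\mathsf p}\cdot\iota=B^{\mathsf p}(\mathrm{id},\hat\iota\cdot(\Sigma^{\mathsf p})^\star\nabla)\cdot\rho^{\mathsf p}\cdot\Sigma^{\mathsf p}\langle\mathrm{id},\gamma^{\mathsf p}\rangle$. Strong probabilistic applicative bisimilarity $\sim^{\mathsf p}$ is the greatest $\mathsf{Ty}$-indexed equivalence relation on $\mu\Sigma^{\mathsf p}$ such that whenever $p\sim^{\mathsf p}_\tau q$ one of: (i) $\gamma^{\mathsf p}(p),\gamma^{\mathsf p}(q)\in\mathcal{D}_\omega(\mu\Sigma^{\mathsf p}_\tau)$ and they assign equal total probability to every $\sim^{\mathsf p}_\tau$-equivalence class; (ii) $\tau=\mathsf{unit}$ and $\gamma^{\mathsf p}(p)=\gamma^{\mathsf p}(q)=*$; (iii) $\tau=\tau_1\to\tau_2$, both $\gamma^{\mathsf p}(p),\gamma^{\mathsf p}(q)$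 are functions $\mu\Sigma^{\mathsf p}_{\tau_1}\to\mu\Sigma^{\mathsf p}_{\tau_2}$ and $\gamma^{\mathsf p}(p)(t)\sim^{\mathsf p}_{\tau_2}\gamma^{\mathsf p}(q)(t)$ for all $t$. *)

(* Defs.v *)
From HB Require Import structures.
From mathcomp Require Import all_boot all_order all_algebra.
From mathcomp Require Import boolp classical_sets.
From mathcomp Require Import Rstruct.
From Stdlib Require Import Rdefinitions.

Set Implicit Arguments.
Unset Strict Implicit.
Unset Printing Implicit Defensive.
Import GRing.Theory Num.Theory.
Local Open Scope ring_scope.
Local Open Scope classical_set_scope.

Inductive ty : Type := tunit | tarr (t1 t2 : ty).

Definition sset := ty -> Type.
Definition smap (X Y : sset) := forall t : ty, X t -> Y t.
Definition sid (X : sset) : smap X X := fun _ x => x.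
Arguments sid X t x : clear implicits.
Definition scomp (X Y W : sset) (g : smap Y W) (f : smap X Y) : smap X W :=
  fun t x => g t (f t x).
Definition ssum (X Y : sset) : sset := fun t => (X t + Y t)%type.
Definition sprod (X Y : sset) : sset := fun t => (X t * Y t)%type.
Definition snabla (X : sset) : smap (ssum X X) X :=
  fun t s => match s with inl x => x | inr x => x end.

(* A finitely supported probability distribution on Y is represented by the
   (discrete, finitely supported) probability it assigns to every subset of Y,
   namely the one induced by some finite formal convex combination
   sum_i r_i . y_i (r_i >= 0, sum_i r_i = 1).                             *)
Definition fin_comb (Y : Type) (l : seq (Y * R)) (A : set Y) : R :=
  \sum_(p <- l) (if `[< A p.1 >] then p.2 else 0).

Definition is_fdist (Y : Type) (mu : set Y -> R) : Prop :=
  exists l : seq (Y * R),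
    [/\ all (fun p => 0 <= p.2) l, \sum_(p <- l) p.2 = 1
      & forall A, mu A = fin_comb l A].

Record fdist (Y : Type) : Type := FDist {
  fprob :> set Y -> R;
  fprobP : is_fdist fprob }.

Lemma fdist_map_proof (X Y : Type) (f : X -> Y) (d : fdist X) :
  is_fdist (fun A : set Y => d (f @^-1` A)).
Proof.
case: d => mu [l [l0 l1 lE]] /=.
exists (map (fun p => (f p.1, p.2)) l); split.
- by rewrite all_map.
- by rewrite big_map.
- by move=> A; rewrite lE /fin_comb big_map.
Qed.

Definition fdist_map (X Y : Type) (f : X -> Y) (d : fdist X) : fdist Y :=
  FDist (fdist_map_proof f d).

Lemma dirac_proof (Y : Type) (y : Y) : is_fdist (fin_comb [:: (y, 1)]).
Proof. exists [:: (y, 1)]; split => //=; first by rewrite ler01. by rewrite big_seq1. Qed.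

Definition fdirac (Y : Type) (y : Y) : fdist Y := FDist (dirac_proof y).

Lemma half_proof (Y : Type) (p q : Y) :
  is_fdist (fin_comb [:: (p, 2^-1); (q, 2^-1)]).
Proof.
exists [:: (p, 2^-1); (q, 2^-1)]; split => //=.
- by rewrite invr_ge0 ler0n.
- by rewrite !big_cons big_nil addr0 /= [RHS](splitr 1) mul1r.
Qed.

Definition fhalf (Y : Type) (p q : Y) : fdist Y := FDist (half_proof p q).

Definition tyS (t1 t2 t3 : ty) : ty :=
  tarr (tarr t1 (tarr t2 t3)) (tarr (tarr t1 t2) (tarr t1 t3)).

Inductive Sig (X : sset) : ty -> Type :=
| Se : Sig X tunit
| Sapp t1 t2 : X (tarr t1 t2) -> X t1 -> Sig X t2
| SS t1 t2 t3 : Sig X (tyS t1 t2 t3)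
| SK t1 t2 : Sig X (tarr t1 (tarr t2 t1))
| SI t : Sig X (tarr t t)
| SS1 t1 t2 t3 : X (tarr t1 (tarr t2 t3)) -> Sig X (tarr (tarr t1 t2) (tarr t1 t3))
| SS2 t1 t2 t3 : X (tarr t1 (tarr t2 t3)) -> X (tarr t1 t2) -> Sig X (tarr t1 t3)
| SK1 t1 t2 : X t1 -> Sig X (tarr t2 t1)
| Splus t : X t -> X t -> Sig X t.

Arguments Se {X}.
Arguments SS {X t1 t2 t3}.
Arguments SK {X t1 t2}.
Arguments SI {X t}.

Definition Sig_map (X Y : sset) (f : smap X Y) : smap (Sig X) (Sig Y) :=
  fun t s => match s in Sig _ t return Sig Y t with
  | Se => Se
  | Sapp _ _ p q => Sapp (f _ p) (f _ q)
  | SS _ _ _ => SS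
  | SK _ _ => SK
  | SI _ => SI
  | SS1 _ _ _ p => SS1 (f _ p)
  | SS2 _ _ _ p q => SS2 (f _ p) (f _ q)
  | SK1 _ t2 p => SK1 t2 (f _ p)
  | Splus _ p q => Splus (f _ p) (f _ q)
  end.

Definition alg (X : sset) := smap (Sig X) X.

Inductive Term (V : sset) : ty -> Type :=
| tvar t : V t -> Term V t
| te : Term V tunit
| tapp t1 t2 : Term V (tarr t1 t2) -> Term V t1 -> Term V t2
| tS t1 t2 t3 : Term V (tyS t1 t2 t3)
| tK t1 t2 : Term V (tarr t1 (tarr t2 t1))
| tI t : Term V (tarr t t)
| tS1 t1 t2 t3 : Term V (tarr t1 (tarr t2 t3)) -> Term V (tarr (tarr t1 t2) (tarr t1 t3))
| tS2 t1 t2 t3 : Term V (tarr t1 (tarr t2 t3)) -> Term V (tarr t1 t2) -> Term V (tarr t1 t3)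
| tK1 t1 t2 : Term V t1 -> Term V (tarr t2 t1)
| tplus t : Term V t -> Term V t -> Term V t.

Arguments te {V}.
Arguments tS {V t1 t2 t3}.
Arguments tK {V t1 t2}.
Arguments tI {V t}.

Definition term_op (V : sset) : alg (Term V) :=
  fun t s => match s in Sig _ t return Term V t with
  | Se => te
  | Sapp _ _ p q => tapp p q
  | SS _ _ _ => tS
  | SK _ _ => tK
  | SI _ => tI
  | SS1 _ _ _ p => tS1 p
  | SS2 _ _ _ p q => tS2 p q
  | SK1 _ t2 p => tK1 t2 p
  | Splus _ p q => tplus p q
  end.

Fixpoint Term_map (V W : sset) (f : smap V W) (t : ty) (e : Term V t) : Term W t :=
  match e in Term _ t return Term W t with
  | tvar _ v => tvar (f _ v)
  | te => te
  | tapp _ _ p q => tapp (Term_map f p) (Term_map f q)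
  | tS _ _ _ => tS
  | tK _ _ => tK
  | tI _ => tI
  | tS1 _ _ _ p => tS1 (Term_map f p)
  | tS2 _ _ _ p q => tS2 (Term_map f p) (Term_map f q)
  | tK1 _ t2 p => tK1 t2 (Term_map f p)
  | tplus _ p q => tplus (Term_map f p) (Term_map f q)
  end.

Fixpoint eval (X : sset) (a : alg X) (t : ty) (e : Term X t) : X t :=
  match e in Term _ t return X t with
  | tvar _ x => x
  | te => a _ Se
  | tapp _ _ p q => a _ (Sapp (eval a p) (eval a q))
  | tS _ _ _ => a _ SS
  | tK _ _ => a _ SK
  | tI _ => a _ SI
  | tS1 _ _ _ p => a _ (SS1 (eval a p))
  | tS2 _ _ _ p q => a _ (SS2 (eval a p) (eval a q))
  | tK1 _ t2 p => a _ (SK1 t2 (eval a p))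
  | tplus _ p q => a _ (Splus (eval a p) (eval a q))
  end.

Definition sempty : sset := fun _ => Empty_set.
Definition muS : sset := Term sempty.
Definition iota : alg muS := @term_op sempty.

Definition B (X Y : sset) (t : ty) : Type :=
  match t with
  | tunit => (fdist (Y tunit) + unit)%type
  | tarr t1 t2 => (fdist (Y (tarr t1 t2)) + (X t1 -> Y t2))%type
  end.

Definition Bmap (X X' Y Y' : sset) (f : smap X' X) (g : smap Y Y') :
    smap (B X Y) (B X' Y') :=
  fun t => match t return B X Y t -> B X' Y' t with
  | tunit => fun b => match b with
                      | inl d => inl (fdist_map (g tunit) d)
                      | inr u => inr u end
  | tarr t1 t2 => fun b => match b with
                      | inl d => inl (fdist_map (g (tarr t1 t2)) d)
                      | inr h => inr (fun x => g t2 (h (f t1 x))) end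
  end.

Definition Bdist (X Y : sset) (t : ty) : fdist (Y t) -> B X Y t :=
  match t return fdist (Y t) -> B X Y t with
  | tunit => fun d => inl d
  | tarr _ _ => fun d => inl d
  end.

Definition rho (X Y : sset) :
    smap (Sig (sprod X (B X Y))) (B X (Term (ssum X Y))) :=
  fun t s =>
  match s in Sig _ t return B X (Term (ssum X Y)) t with
  | Se => inr tt
  | SS _ _ _ => inr (fun x => tS1 (tvar (inl x) : Term (ssum X Y) _))
  | SS1 _ _ _ p => inr (fun x => tS2 (tvar (inl p.1) : Term (ssum X Y) _)
                                     (tvar (inl x)))
  | SS2 _ _ _ p q =>
      inr (fun x => tapp (tapp (tvar (inl p.1) : Term (ssum X Y) _) (tvar (inl x)))
                         (tapp (tvar (inl q.1)) (tvar (inl x))))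
  | SK _ _ => inr (fun x => tK1 _ (tvar (inl x) : Term (ssum X Y) _))
  | SK1 _ _ p => inr (fun _ => tvar (inl p.1) : Term (ssum X Y) _)
  | SI _ => inr (fun x => tvar (inl x) : Term (ssum X Y) _)
  | Splus t p q =>
      @Bdist X (Term (ssum X Y)) t
        (fhalf (tvar (inl p.1) : Term (ssum X Y) t) (tvar (inl q.1)))
  | Sapp t1 t2 p q =>
      match p.2 with
      | inl d =>
          @Bdist X (Term (ssum X Y)) t2
            (fdist_map (fun p' => tapp (tvar (inr p') : Term (ssum X Y) _)
                                       (tvar (inl q.1))) d)
      | inr f =>
          @Bdist X (Term (ssum X Y)) t2
            (fdirac (tvar (inr (f q.1)) : Term (ssum X Y) t2))
      end
  end.

Definition bialg_rhs (X : sset) (a : alg X) (c : smap X (B X X)) :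
    smap (Sig X) (B X X) :=
  fun t s =>
    Bmap (sid X) (fun t' e => eval a (Term_map (@snabla X) e))
      (rho (Sig_map (fun t' x => (x, c t' x) : sprod X (B X X) t') s)).

Definition is_bialgebra (X : sset) (a : alg X) (c : smap X (B X X)) : Prop :=
  forall t (s : Sig X t), c t (a t s) = bialg_rhs a c s.

(* The operational model gamma^p : mu Sigma^p -> B^p(mu Sigma^p, mu Sigma^p),
   defined by structural recursion: each clause is exactly the defining
   equation  gamma . iota = B(id, \hat iota . Sigma^* nabla) . rho . Sigma<id,gamma>
   instantiated at the corresponding operation.                        *)
Definition gpost : smap (B muS (Term (ssum muS muS))) (B muS muS) :=
  Bmap (sid muS) (fun t e => eval iota (Term_map (@snabla muS) e)).

Definition gpair (t : ty) (x : muS t) (b : B muS muS t) : sprod muS (B muS muS) t :=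
  (x, b).

Fixpoint gamma (t : ty) (e : muS t) {struct e} : B muS muS t :=
  match e in Term _ t return B muS muS t with
  | tvar _ v => match v with end
  | te => gpost (rho Se)
  | tapp _ _ p q => gpost (rho (Sapp (gpair p (gamma p)) (gpair q (gamma q))))
  | tS _ _ _ => gpost (rho SS)
  | tK _ _ => gpost (rho SK)
  | tI _ => gpost (rho SI)
  | tS1 _ _ _ p => gpost (rho (SS1 (gpair p (gamma p))))
  | tS2 _ _ _ p q => gpost (rho (SS2 (gpair p (gamma p)) (gpair q (gamma q))))
  | tK1 _ t2 p => gpost (rho (SK1 t2 (gpair p (gamma p))))
  | tplus _ p q => gpost (rho (Splus (gpair p (gamma p)) (gpair q (gamma q))))
  end.

Definition srel := forall t : ty, muS t -> muS t -> Prop.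

Definition is_equiv (T : Type) (r : T -> T -> Prop) : Prop :=
  [/\ forall x, r x x, forall x y, r x y -> r y x
    & forall x y z, r x y -> r y z -> r x z].

Definition is_class (T : Type) (r : T -> T -> Prop) (E : set T) : Prop :=
  exists x, E = [set y | r x y].

Definition bisim_step (Rl : srel) (t : ty) : muS t -> muS t -> Prop :=
  match t return muS t -> muS t -> Prop with
  | tunit => fun p q =>
      match gamma p, gamma q with
      | inl d1, inl d2 => forall E, is_class (Rl tunit) E -> d1 E = d2 E
      | inr tt, inr tt => True
      | _, _ => False
      end
  | tarr t1 t2 => fun p q =>
      match gamma p, gamma q with
      | inl d1, inl d2 => forall E, is_class (Rl (tarr t1 t2)) E -> d1 E = d2 E
      | inr f1, inr f2 => forall u : muS t1, Rl t2 (f1 u) (f2 u)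
      | _, _ => False
      end
  end.

Definition prob_app_bisim (Rl : srel) : Prop :=
  (forall t, is_equiv (Rl t)) /\
  (forall t p q, Rl t p q -> bisim_step Rl p q).

(* ~^p : the greatest such relation, i.e. the union of all of them *)
Definition pbisim (t : ty) (p q : muS t) : Prop :=
  exists Rl : srel, prob_app_bisim Rl /\ Rl t p q.

Definition locally_final (C : sset) (c : smap C (B C C)) : Prop :=
  forall (Y : sset) (g : smap Y (B C Y)),
    exists h : smap Y C,
      (forall t y, c t (h t y) = Bmap (sid C) h (g t y)) /\
      (forall h' : smap Y C,
         (forall t y, c t (h' t y) = Bmap (sid C) h' (g t y)) ->
         forall t y, h' t y = h t y).

Definition coalg_iso (C D : sset) (c : smap C (B C C)) (d : smap D (B D D)) : Prop :=
  exists (f : smap C D) (g : smap D C),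
    [/\ forall t x, g t (f t x) = x,
        forall t y, f t (g t y) = y
      & forall t x, d t (f t x) = Bmap g f (c t x)].

Definition alg_morph (X Y : sset) (a : alg X) (b : alg Y) (h : smap X Y) : Prop :=
  forall t (s : Sig X t), h t (a t s) = b t (Sig_map h s).

(* Main.v *)
From HB Require Import structures.
From mathcomp Require Import all_boot all_order all_algebra.
From mathcomp Require Import boolp classical_sets.
From mathcomp Require Import Rstruct.
From Stdlib Require Import Rdefinitions.
Require Import Defs.

Set Implicit Arguments.
Unset Strict Implicit.
Unset Printing Implicit Defensive.
Import GRing.Theory Num.Theory.
Local Open Scope ring_scope.
Local Open Scope classical_set_scope.

Lemma fdist_ext Y (d1 d2 : fdist Y) : fprob d1 = fprob d2 -> d1 = d2.
Proof.
case: d1 d2 => f1 p1 [f2 p2] /= E; subst f2; congr FDist; apply: Prop_irrelevance.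
Qed.

Lemma fdist_map_comp X Y W (f : X -> Y) (g : Y -> W) d :
  fdist_map g (fdist_map f d) = fdist_map (fun x => g (f x)) d.
Proof. exact: fdist_ext. Qed.

Lemma fdist_map_id X (d : fdist X) : fdist_map (fun x => x) d = d.
Proof. by apply: fdist_ext; case: d. Qed.

Lemma fdist_map_dirac X Y (f : X -> Y) x : fdist_map f (fdirac x) = fdirac (f x).
Proof.
apply: fdist_ext; apply: funext => A /=; by rewrite /fin_comb !big_seq1.
Qed.

Lemma fdist_map_ext X Y (f g : X -> Y) d : f =1 g -> fdist_map f d = fdist_map g d.
Proof. by move=> /funext ->. Qed.

Section Final.
Variable A : Type.

Definition validw (n : nat) (w : nat -> R) : Prop :=
  (forall i, leq i.+1 n -> 0 <= w i) /\ \sum_(i < n) w i = 1.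

CoInductive tree : Type :=
| Leaf (a : A)
| Node (n : nat) (k : nat -> tree) (w : nat -> R) (H : validw n w).

Definition frob (t : tree) : tree :=
  match t with Leaf a => Leaf a | Node n k w H => Node k H end.
Lemma frob_eq t : t = frob t. Proof. by case: t. Qed.

Definition nlist (n : nat) (k : nat -> tree) (w : nat -> R) : seq (tree * R) :=
  [seq (k i, w i) | i <- seq.iota 0 n].

Lemma nlist_ok n k w : validw n w ->
  all (fun p => 0 <= p.2) (nlist n k w) /\ \sum_(p <- nlist n k w) p.2 = 1.
Proof.
move=> [H0 H1]; split.
  by rewrite /nlist all_map; apply/allP => i; rewrite mem_iota add0n => /andP [_ /H0].
by rewrite big_map /= -H1 -(big_mkord xpredT w) /index_iota subn0.
Qed.

Definition ndist n (k : nat -> tree) w (H : validw n w) : fdist tree.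
refine (@FDist _ (fin_comb (nlist n k w)) _).
have [? ?] := nlist_ok k H; by exists (nlist n k w).
Defined.

Definition sat (E : tree -> tree -> Prop) (C : set tree) :=
  forall x y, E x y -> C x -> C y.

Definition step (E : tree -> tree -> Prop) (x y : tree) : Prop :=
  match x, y with
  | Leaf a, Leaf b => a = b
  | Node n k w _, Node n' k' w' _ =>
      forall C, sat E C -> fin_comb (nlist n k w) C = fin_comb (nlist n' k' w') C
  | _, _ => False
  end.

Lemma step_refl E x : step E x x.
Proof. by case: x. Qed.
Lemma step_sym E x y : step E x y -> step E y x.
Proof. by case: x; case: y => //= *; symmetry; auto. Qed.
Lemma step_trans E x y u : step E x y -> step E y u -> step E x u.
Proof.
case: x => [a|n k w H]; case: y => [b|n' k' w' H']; case: u => [c|n'' k'' w'' H''] //=.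
- by move=> -> ->.
- move=> H1 H2 C HC; by rewrite H1 ?H2.
Qed.
Lemma step_mono (E E' : tree -> tree -> Prop) x y :
  (forall a b, E a b -> E' a b) -> step E x y -> step E' x y.
Proof.
move=> HE; case: x; case: y => //= ? ? ? ? ? ? ? ? H C HC; apply: H.
by move=> a b /HE; apply: HC.
Qed.

Inductive eqc (G : tree -> tree -> Prop) : tree -> tree -> Prop :=
| ec_base x y : G x y -> eqc G x y
| ec_refl x : eqc G x x
| ec_sym x y : eqc G x y -> eqc G y x
| ec_trans x y u : eqc G x y -> eqc G y u -> eqc G x u.

Lemma eqc_post G : (forall x y, G x y -> step (eqc G) x y) ->
  forall x y, eqc G x y -> step (eqc G) x y.
Proof.
move=> HG x y; elim => {x y}.
- exact: HG.
- by move=> *; apply: step_refl.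
- by move=> *; apply: step_sym.
- by move=> *; apply: step_trans; eauto.
Qed.

Definition beq (x y : tree) : Prop :=
  exists E, (forall a b, E a b -> step E a b) /\ E x y.

Lemma beq_coind G x y : (forall a b, G a b -> step (eqc G) a b) -> G x y -> beq x y.
Proof.
move=> HG Gxy; exists (eqc G); split; last exact: ec_base.
exact: eqc_post.
Qed.

Lemma beq_post x y : beq x y -> step beq x y.
Proof.
case=> E [HE Exy]; apply: step_mono (HE _ _ Exy) => a b Eab.
by exists E.
Qed.

Lemma beq_refl x : beq x x.
Proof. exists eq; split => // a b <-; exact: step_refl. Qed.

Lemma beq_sym x y : beq x y -> beq y x.
Proof.
case=> E [HE Exy]; apply: (@beq_coind (fun a b => E b a)); last by [].
move=> a b Eba; apply: step_sym; apply: step_mono (HE _ _ Eba) => u v Euv.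
by apply: ec_sym; apply: ec_base.
Qed.

Lemma beq_trans x y u : beq x y -> beq y u -> beq x u.
Proof.
case=> E1 [H1 E1xy] [E2 [H2 E2yu]].
apply: (@beq_coind (eqc (fun a b => E1 a b \/ E2 a b))); last first.
  by apply: (@ec_trans _ _ y); apply: ec_base; [left|right].
move=> a b Gab.
have: step (eqc (fun a b => E1 a b \/ E2 a b)) a b.
  apply: eqc_post Gab => c d [/H1|/H2] H; apply: step_mono H => ? ? ?.
    by apply: ec_base; left.
  by apply: ec_base; right.
apply: step_mono => ? ? ?; exact: ec_base.
Qed.

Definition Q : Type := {P : tree -> Prop | exists t, P = beq t}.
Definition pi (t : tree) : Q := exist _ (beq t) (ex_intro _ t erefl).

Lemma pi_eq x y : beq x y -> pi x = pi y.
Proof.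
move=> H; apply: eq_exist; apply: funext => u; apply: propext; split.
  by apply: beq_trans; apply: beq_sym.
by apply: beq_trans.
Qed.

Lemma pi_inj x y : pi x = pi y -> beq x y.
Proof.
move=> /(congr1 (@proj1_sig _ _)) /= E; rewrite E; exact: beq_refl.
Qed.

Definition rep (c : Q) : tree := proj1_sig (cid (proj2_sig c)).

Lemma repK c : pi (rep c) = c.
Proof.
case: c => P HP; rewrite /rep /=; apply: eq_exist.
by case: (cid HP).
Qed.

Definition FF (X : Type) := (fdist X + A)%type.
Definition Fmap X Y (f : X -> Y) (b : FF X) : FF Y :=
  match b with inl d => inl (fdist_map f d) | inr a => inr a end.

Lemma Fmap_comp X Y W (f : X -> Y) (g : Y -> W) b :
  Fmap g (Fmap f b) = Fmap (fun x => g (f x)) b.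
Proof. by case: b => //= d; rewrite fdist_map_comp. Qed.
Lemma Fmap_id X (b : FF X) : Fmap (fun x => x) b = b.
Proof. by case: b => //= d; rewrite fdist_map_id. Qed.

Definition obs (t : tree) : FF Q :=
  match t with Leaf a => inr a | Node n k w H => inl (fdist_map pi (ndist k H)) end.

Definition zQ (c : Q) : FF Q := obs (rep c).

Lemma obs_beq x y : beq x y -> obs x = obs y.
Proof.
move/beq_post; case: x; case: y => //=; first by move=> ? ? ->.
move=> ? ? ? ? ? ? ? ? H; congr inl; apply: fdist_ext; apply: funext => B /=.
by apply: H => a b /pi_eq E; rewrite /preimage /= E.
Qed.

Lemma zQ_pi t : zQ (pi t) = obs t.
Proof. by apply: obs_beq; apply: pi_inj; rewrite repK. Qed.

Section Unfold.
Variables (X : Type) (kk : X -> FF X).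

Definition pick (d : fdist X) : seq (X * R) := proj1_sig (cid (fprobP d)).
Lemma pickP (d : fdist X) :
  [/\ all (fun p => 0 <= p.2) (pick d), \sum_(p <- pick d) p.2 = 1
      & forall B, d B = fin_comb (pick d) B].
Proof. rewrite /pick; by case: (cid _). Qed.

Lemma pick_valid (d : fdist X) (x0 : X) :
  validw (size (pick d)) (fun i => (nth (x0, 0) (pick d) i).2).
Proof.
have [H0 H1 _] := pickP d; split.
  by move=> i Hi; move/all_nthP: H0; apply.
rewrite -H1 (big_nth (x0, 0)) big_mkord //.
Qed.

CoFixpoint unf (x : X) : tree :=
  match kk x with
  | inr a => Leaf a
  | inl d => Node (fun i => unf (nth (x, 0) (pick d) i).1) (pick_valid d x)
  end.

Lemma unf_inr x a : kk x = inr a -> unf x = Leaf a.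
Proof. by move=> E; rewrite [unf x]frob_eq /= E. Qed.

Lemma unf_inl x d : kk x = inl d ->
  unf x = Node (fun i => unf (nth (x, 0) (pick d) i).1) (pick_valid d x).
Proof. by move=> E; rewrite [unf x]frob_eq /= E. Qed.

Lemma nlist_unf (d : fdist X) x0 :
  nlist (size (pick d)) (fun i => unf (nth (x0, 0) (pick d) i).1)
        (fun i => (nth (x0, 0) (pick d) i).2)
  = [seq (unf p.1, p.2) | p <- pick d].
Proof.
have E : pick d = mkseq (nth (x0, 0) (pick d)) (size (pick d)) by rewrite mkseq_nth.
rewrite /nlist [in RHS]E /mkseq -map_comp.
by apply: eq_map.
Qed.

Definition unfQ (x : X) : Q := pi (unf x).

Lemma unfQ_morph x : zQ (unfQ x) = Fmap unfQ (kk x).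
Proof.
rewrite /unfQ zQ_pi; case E: (kk x) => [d|a] /=.
  rewrite E /=; congr inl; apply: fdist_ext; apply: funext => B /=.
  have [_ _ ->] := pickP d.
  by rewrite nlist_unf /fin_comb big_map.
by rewrite E.
Qed.

Lemma unfQ_uniq (m : X -> Q) : (forall x, zQ (m x) = Fmap m (kk x)) ->
  forall x, m x = unfQ x.
Proof.
move=> Hm x.
pose G := fun a b => beq a b \/ exists x, a = unf x /\ b = rep (m x).
suff : beq (unf x) (rep (m x)) by move/pi_eq; rewrite repK /unfQ => ->.
apply: (@beq_coind G); last by right; exists x.
move=> a b [Hab|[y [-> ->]]].
  by apply: step_mono (beq_post Hab) => ? ? ?; apply: ec_base; left.
have := Hm y; rewrite /zQ.
case E: (kk y) => [d|a0] /=; case Eb: (rep (m y)) => [a1|n k w H] //=.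
- move=> [Ed]; rewrite E /= => C HC.
  rewrite nlist_unf /fin_comb big_map /=.
  have sC : forall t, C t <-> (pi @` C) (pi t).
    move=> t; split; first by move=> Ct; exists t.
    case=> t' Ct' /pi_inj Htt; apply: HC Ct'; apply: ec_base; by left.
  have -> : \sum_(p <- nlist n k w) (if `[< C p.1 >] then p.2 else 0)
       = fin_comb (nlist n k w) (pi @^-1` (pi @` C)).
    rewrite /= /fin_comb; apply: eq_bigr => p _.
    by congr (if _ then _ else _); apply: asbool_equiv_eq; apply: sC.
  have := congr1 (fun f => f (pi @` C)) Ed; rewrite /= => ->.
  have [_ _ ->] := pickP d; rewrite /fin_comb; apply: eq_bigr => p _.
  congr (if _ then _ else _); apply: asbool_equiv_eq; split.
    move=> Cu; exists (rep (m p.1)); last exact: repK.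
    apply: HC Cu; apply: ec_base; right; by exists p.1.
  case=> t Ct Et; apply: (HC (rep (m p.1))).
    apply: ec_sym; apply: ec_base; right; by exists p.1.
  by apply/sC; rewrite repK -Et; exists t.
- by move=> [->]; rewrite E.
Qed.

End Unfold.

Lemma lambek (b : FF Q) : exists c, zQ c = b.
Proof.
pose kk := Fmap zQ : FF Q -> FF (FF Q).
exists (unfQ kk b).
have Hid : forall c, unfQ kk (zQ c) = c.
  have H1 := @unfQ_uniq _ zQ (fun c => c) (fun c => esym (Fmap_id _)).
  have H2 := @unfQ_uniq _ zQ (fun c => unfQ kk (zQ c)).
  move=> c; rewrite H2; first by rewrite -H1.
  by move=> c'; rewrite unfQ_morph /kk Fmap_comp.
rewrite unfQ_morph /kk Fmap_comp.
by rewrite (_ : (fun x => unfQ kk (zQ x)) = (fun x => x)) ?Fmap_id //; apply: funext.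
Qed.

End Final.

Lemma Bmap_comp (X Y1 Y2 Y3 : sset) (g1 : smap Y1 Y2) (g2 : smap Y2 Y3) t (b : B X Y1 t) :
  Bmap (sid X) g2 (Bmap (sid X) g1 b) = Bmap (sid X) (fun t y => g2 t (g1 t y)) b.
Proof. by case: t b => [|t1 t2] [d|f] //=; rewrite fdist_map_comp. Qed.

Lemma Bmap_id (X Y : sset) t (b : B X Y t) : Bmap (sid X) (sid Y) b = b.
Proof. by case: t b => [|t1 t2] [d|f] //=; rewrite /sid fdist_map_id. Qed.

Fixpoint AA (t : ty) : Type :=
  match t with tunit => unit | tarr t1 t2 => Q (AA t1) -> Q (AA t2) end.
Definition Z : sset := fun t => Q (AA t).
Definition z : smap Z (B Z Z) := fun t =>
  match t return Z t -> B Z Z t with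
  | tunit => @zQ unit
  | tarr t1 t2 => @zQ (AA (tarr t1 t2))
  end.

Fixpoint hh (Y : sset) (g : smap Y (B Z Y)) (t : ty) : Y t -> Z t :=
  match t return Y t -> Z t with
  | tunit => unfQ (g tunit)
  | tarr t1 t2 => unfQ (fun y : Y (tarr t1 t2) =>
      match g (tarr t1 t2) y return FF (AA (tarr t1 t2)) (Y (tarr t1 t2)) with
      | inl d => inl d
      | inr f => inr (fun u => @hh Y g t2 (f u)) end)
  end.

Lemma z_lf : locally_final z.
Proof.
move=> Y g; exists (hh g); split.
  case=> [|t1 t2] y /=; rewrite unfQ_morph //.
  by case: (g _ y).
move=> h' Hh'; elim=> [|t1 _ t2 IH2] y /=.
  apply: unfQ_uniq => x; have := Hh' tunit x; rewrite /= => ->.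
  by case: (g _ x).
apply: unfQ_uniq => x; have := Hh' (tarr t1 t2) x; rewrite /= => ->.
case: (g _ x) => //= f; congr inr; apply: funext => u; exact: IH2.
Qed.

Definition GG (C : sset) (s : ty) (X : Type) : Type :=
  match s with
  | tunit => (fdist X + unit)%type
  | tarr t1 t2 => (fdist X + (C t1 -> C t2))%type end.

Definition Gmap (C : sset) (s : ty) (X X' : Type) (m : X -> X') : GG C s X -> GG C s X' :=
  match s return GG C s X -> GG C s X' with
  | tunit => fun b => match b with inl d => inl (fdist_map m d) | inr u => inr u end
  | tarr _ _ => fun b => match b with inl d => inl (fdist_map m d) | inr u => inr u end
  end.

Definition toG (C : sset) (s : ty) : B C C s -> GG C s (C s) :=
  match s return B C C s -> GG C s (C s) with
  | tunit => fun b => b | tarr _ _ => fun b => b end.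

Lemma Gmap_comp C s X Y W (f : X -> Y) (g : Y -> W) b :
  Gmap (C:=C) (s:=s) g (Gmap f b) = Gmap (fun x => g (f x)) b.
Proof. by case: s b => [|t1 t2] [d|f'] //=; rewrite fdist_map_comp. Qed.
Lemma Gmap_id C s X (b : GG C s X) : Gmap (fun x => x) b = b.
Proof. by case: s b => [|t1 t2] [d|f'] //=; rewrite fdist_map_id. Qed.

Definition YY (C : sset) (s : ty) (X : Type) : sset :=
  fun t => (C t + {_ : t = s & X})%type.

Definition embed (C : sset) (X : Type) (s : ty) : GG C s X -> B C (YY C s X) s :=
  match s as s0 return GG C s0 X -> B C (YY C s0 X) s0 with
  | tunit => fun b => match b with
      | inl d => inl (fdist_map (fun x => inr (existT (fun _ => X) erefl x)) d)
      | inr u => inr u end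
  | tarr t1 t2 => fun b => match b with
      | inl d => inl (fdist_map (fun x => inr (existT (fun _ => X) erefl x)) d)
      | inr f => inr (fun u => inl (f u)) end
  end.

Definition gY (C : sset) (c : smap C (B C C)) (s : ty) (X : Type) (k : X -> GG C s X) :
  smap (YY C s X) (B C (YY C s X)) := fun t y =>
  match y with
  | inl x => Bmap (sid C) (fun t' (x' : C t') => @inl (C t') {_ : t' = s & X} x') (c t x)
  | inr (existT e x) => eq_rect_r (fun t => B C (YY C s X) t) (embed (k x)) e
  end.

Lemma lf_id (C : sset) (c : smap C (B C C)) : locally_final c ->
  forall h : smap C C, (forall t x, c t (h t x) = Bmap (sid C) h (c t x)) ->
  forall t x, h t x = x.
Proof.
move=> Hc h Hh t x.
have [h0 [_ U]] := Hc C c.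
rewrite (U h Hh) -(U (sid C)) // => t' y; by rewrite Bmap_id.
Qed.

Lemma sort_final (C : sset) (c : smap C (B C C)) : locally_final c ->
  forall s X (k : X -> GG C s X), exists m : X -> C s,
    (forall x, toG (c s (m x)) = Gmap m (k x)) /\
    (forall m', (forall x, toG (c s (m' x)) = Gmap m' (k x)) -> forall x, m' x = m x).
Proof.
move=> Hc s X k.
have [h [Hh U]] := Hc _ (gY c k).
have hl : forall t x, h t (inl x) = x.
  apply: (lf_id Hc (h := fun t x => h t (inl x))) => t x.
  by rewrite Hh /= Bmap_comp.
exists (fun x => h s (inr (existT _ erefl x))); split.
  move=> x; rewrite Hh /= /eq_rect_r /=.
  case: s k h Hh U hl => [|t1 t2] k h Hh U hl /=; case: (k x) => [d|f] /=;
    rewrite ?fdist_map_comp //; congr inr; apply: funext => u; by rewrite hl.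
move=> m' Hm' x.
pose h' : smap (YY C s X) C := fun t y =>
  match y with
  | inl x => x
  | inr (existT e x) => eq_rect_r C (m' x) e end.
suff E : forall t y, h' t y = h t y by exact: (E s (inr (existT _ erefl x))).
apply: U => t [x'|[e x']] /=.
  by rewrite Bmap_comp Bmap_id.
subst t; rewrite /eq_rect_r /= {}/h'.
have := Hm' x'.
case: s k h Hh hl m' Hm' => [|t1 t2] k h Hh hl m' Hm' /= ->;
  case: (k x') => [d|f] /=; rewrite ?fdist_map_comp //.
Qed.

Definition mkm (E : sset) (e : smap E (B E E)) (He : locally_final e) (s : ty) (X : Type)
  (k : X -> GG E s X) : X -> E s := proj1_sig (cid (sort_final He k)).

Lemma mkm_morph E e He s X k x :
  toG (e s (@mkm E e He s X k x)) = Gmap (@mkm E e He s X k) (k x).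
Proof. rewrite /mkm; case: (cid _) => m [H _] /=; exact: H. Qed.

Lemma mkm_morph_arr E e He t1 t2 X k x :
  e (tarr t1 t2) (@mkm E e He (tarr t1 t2) X k x) =
  Gmap (C:=E) (s:=tarr t1 t2) (@mkm E e He (tarr t1 t2) X k) (k x).
Proof. exact: (@mkm_morph E e He (tarr t1 t2) X k x). Qed.

Lemma sf_uniq (E : sset) (e : smap E (B E E)) (He : locally_final e) s X
  (k : X -> GG E s X) (m1 m2 : X -> E s) :
  (forall x, toG (e s (m1 x)) = Gmap m1 (k x)) ->
  (forall x, toG (e s (m2 x)) = Gmap m2 (k x)) -> forall x, m1 x = m2 x.
Proof.
move=> H1 H2 x; have [m [_ U]] := sort_final He k.
by rewrite (U _ H1) (U _ H2).
Qed.

Definition karr (C D : sset) (c : smap C (B C C)) t1 t2 (f2 : C t2 -> D t2)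
  (g1 : D t1 -> C t1) : C (tarr t1 t2) -> GG D (tarr t1 t2) (C (tarr t1 t2)) :=
  fun x => match c (tarr t1 t2) x with
  | inl dd => inl dd
  | inr f => inr (fun u => f2 (f (g1 u))) end.
Arguments karr : simpl never.

Fixpoint FG (C D : sset) (c : smap C (B C C)) (d : smap D (B D D))
  (Hc : locally_final c) (Hd : locally_final d) (t : ty) : (C t -> D t) * (D t -> C t) :=
  match t return (C t -> D t) * (D t -> C t) with
  | tunit => (@mkm D d Hd tunit (C tunit) (fun x => c tunit x),
              @mkm C c Hc tunit (D tunit) (fun y => d tunit y))
  | tarr t1 t2 =>
     (@mkm D d Hd (tarr t1 t2) (C (tarr t1 t2))
        (karr c (@FG C D c d Hc Hd t2).1 (@FG C D c d Hc Hd t1).2),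
      @mkm C c Hc (tarr t1 t2) (D (tarr t1 t2))
        (karr d (@FG C D c d Hc Hd t2).2 (@FG C D c d Hc Hd t1).1))
  end.

Lemma FG_ok (C D : sset) (c : smap C (B C C)) (d : smap D (B D D))
  (Hc : locally_final c) (Hd : locally_final d) t :
  [/\ forall x, (@FG C D c d Hc Hd t).2 ((@FG C D c d Hc Hd t).1 x) = x, forall y, (@FG C D c d Hc Hd t).1 ((@FG C D c d Hc Hd t).2 y) = y
    & forall x, d t ((@FG C D c d Hc Hd t).1 x) = Bmap (fun t => (@FG C D c d Hc Hd t).2) (fun t => (@FG C D c d Hc Hd t).1) (c t x)].
Proof.
elim: t => [|t1 [IA1 IB1 _] t2 [IA2 IB2 _]].
  have Hf := mkm_morph Hd (s := tunit) (fun x : C tunit => c tunit x).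
  have Hg := mkm_morph Hc (s := tunit) (fun y : D tunit => d tunit y).
  have Hf' : forall x, d tunit (mkm Hd (s:=tunit) (fun x : C tunit => c tunit x) x) = Gmap (C:=D) (s:=tunit) (mkm Hd (s:=tunit) (fun x : C tunit => c tunit x)) (c tunit x) := Hf.
  have Hg' : forall x, c tunit (mkm Hc (s:=tunit) (fun y : D tunit => d tunit y) x) = Gmap (C:=C) (s:=tunit) (mkm Hc (s:=tunit) (fun y : D tunit => d tunit y)) (d tunit x) := Hg.
  rewrite /=; split.
  - apply: (sf_uniq Hc (s := tunit) (k := fun x => c tunit x)) => x.
      by rewrite Hg Hf' Gmap_comp.
    by rewrite Gmap_id.
  - apply: (sf_uniq Hd (s := tunit) (k := fun x => d tunit x)) => x.
      by rewrite Hf Hg' Gmap_comp.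
    by rewrite Gmap_id.
  - by move=> x; rewrite Hf'.
have Hf := mkm_morph Hd (karr c (FG Hc Hd t2).1 (FG Hc Hd t1).2).
have Hg := mkm_morph Hc (karr d (FG Hc Hd t2).2 (FG Hc Hd t1).1).
rewrite /=; split.
- apply: (sf_uniq Hc (s := tarr t1 t2) (k := fun x => c (tarr t1 t2) x)) => x.
    rewrite Hg /karr /= mkm_morph_arr /karr; case: (c _ x) => [dd|f] /=; first by rewrite fdist_map_comp.
    by congr inr; apply: funext => u; rewrite IA1 IA2.
  by case: (c _ x) => [dd|f] //=; rewrite fdist_map_id.
- apply: (sf_uniq Hd (s := tarr t1 t2) (k := fun x => d (tarr t1 t2) x)) => x.
    rewrite Hf /karr /= mkm_morph_arr /karr; case: (d _ x) => [dd|f] /=; first by rewrite fdist_map_comp.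
    by congr inr; apply: funext => u; rewrite IB1 IB2.
  by case: (d _ x) => [dd|f] //=; rewrite fdist_map_id.
- by move=> x; rewrite /= mkm_morph_arr /karr; case: (c _ x).
Qed.

Lemma lf_iso (C D : sset) (c : smap C (B C C)) (d : smap D (B D D)) :
  locally_final c -> locally_final d -> coalg_iso c d.
Proof.
move=> Hc Hd.
exists (fun t => (@FG C D c d Hc Hd t).1), (fun t => (@FG C D c d Hc Hd t).2).
by split => t x; case: (FG_ok Hc Hd t).
Qed.

Arguments z : clear implicits.
Arguments Bdist : clear implicits.

Definition zinvQ (A : Type) (b : FF A (Q A)) : Q A := proj1_sig (cid (lambek b)).
Lemma zinvQK A b : zQ (@zinvQ A b) = b.
Proof. rewrite /zinvQ; by case: (cid _). Qed.

Definition zinv (t : ty) : B Z Z t -> Z t :=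
  match t return B Z Z t -> Z t with
  | tunit => @zinvQ unit
  | tarr t1 t2 => @zinvQ (AA (tarr t1 t2)) end.
Arguments zinv : clear implicits.
Lemma zinvK t b : z t (zinv t b) = b.
Proof. by case: t b => [|t1 t2] b; apply: zinvQK. Qed.

Definition ofFF (t : ty) : FF (AA t) (Z t) -> B Z Z t :=
  match t return FF (AA t) (Z t) -> B Z Z t with
  | tunit => fun b => b | tarr _ _ => fun b => b end.
Lemma zE t (x : Z t) : z t x = ofFF (zQ x).
Proof. by case: t x. Qed.
Lemma ofFF_inl t d : ofFF (t:=t) (inl d) = Bdist Z Z t d.
Proof. by case: t d. Qed.
Lemma Bmap_Bdist (X X' Y Y' : sset) (f : smap X' X) (g : smap Y Y') t d :
  Bmap f g (Bdist X Y t d) = Bdist X' Y' t (fdist_map (g t) d).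
Proof. by case: t d. Qed.

Definition appX t1 t2 : Type := (Z t2 + (Z (tarr t1 t2) * Z t1))%type.
Definition appk t1 t2 (y : appX t1 t2) : FF (AA t2) (appX t1 t2) :=
  match y with
  | inl x => Fmap inl (zQ x)
  | inr (p, q) => inl
      match zQ p with
      | inl d => fdist_map (fun p' => @inr (Z t2) _ (p', q)) d
      | inr f => fdirac (@inl _ (Z (tarr t1 t2) * Z t1) (f q)) end
  end.
Definition app t1 t2 (p : Z (tarr t1 t2)) (q : Z t1) : Z t2 :=
  unfQ (@appk t1 t2) (inr (p, q)).

Lemma app_inl t1 t2 (x : Z t2) : unfQ (@appk t1 t2) (inl x) = x.
Proof.
have H1 := @unfQ_uniq _ _ (@zQ _) (fun c => c) (fun c => esym (Fmap_id _)).
have H2 := @unfQ_uniq _ _ (@zQ _) (fun c => unfQ (@appk t1 t2) (inl c)).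
rewrite H2; first by rewrite -H1.
by move=> c; rewrite unfQ_morph /= Fmap_comp.
Qed.

Lemma app_eq t1 t2 p q : zQ (@app t1 t2 p q) =
  inl (match zQ p with
       | inl d => fdist_map (fun p' => app p' q) d
       | inr f => fdirac (f q) end).
Proof.
rewrite /app unfQ_morph /=; case: (zQ p) => [d|f] /=; congr inl.
  by rewrite fdist_map_comp.
by rewrite fdist_map_dirac app_inl.
Qed.

Lemma z_app t1 t2 p q : z t2 (@app t1 t2 p q) =
  Bdist Z Z t2 (match z (tarr t1 t2) p with
       | inl d => fdist_map (fun p' => app p' q) d
       | inr f => fdirac (f q) end).
Proof. by rewrite zE app_eq ofFF_inl. Qed.

Definition aS2 t1 t2 t3 (p : Z (tarr t1 (tarr t2 t3))) (q : Z (tarr t1 t2)) : Z (tarr t1 t3) :=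
  zinv (tarr t1 t3) (inr (fun x => app (app p x) (app q x))).
Definition aS1 t1 t2 t3 (p : Z (tarr t1 (tarr t2 t3))) : Z (tarr (tarr t1 t2) (tarr t1 t3)) :=
  zinv (tarr (tarr t1 t2) (tarr t1 t3)) (inr (fun q => aS2 p q)).
Definition aS t1 t2 t3 : Z (tyS t1 t2 t3) :=
  zinv (tyS t1 t2 t3) (inr (fun p => @aS1 t1 t2 t3 p)).
Definition aK1 t1 t2 (p : Z t1) : Z (tarr t2 t1) := zinv (tarr t2 t1) (inr (fun _ => p)).
Definition aK t1 t2 : Z (tarr t1 (tarr t2 t1)) :=
  zinv (tarr t1 (tarr t2 t1)) (inr (fun p => aK1 t2 p)).
Definition aI t : Z (tarr t t) := zinv (tarr t t) (inr (fun x => x)).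
Definition ae : Z tunit := zinv tunit (inr tt).
Definition aplus t (p q : Z t) : Z t := zinv t (Bdist Z Z t (fhalf p q)).

Definition aZ : alg Z := fun t s =>
  match s in Sig _ t return Z t with
  | Se => ae
  | Sapp _ _ p q => app p q
  | SS t1 t2 t3 => aS t1 t2 t3
  | SK t1 t2 => aK t1 t2
  | SI t => aI t
  | SS1 _ _ _ p => aS1 p
  | SS2 _ _ _ p q => aS2 p q
  | SK1 _ t2 p => aK1 t2 p
  | Splus _ p q => aplus p q
  end.

Lemma fhalf_map X Y (f : X -> Y) p q : fdist_map f (fhalf p q) = fhalf (f p) (f q).
Proof.
apply: fdist_ext; apply: funext => A /=.
by rewrite /fin_comb !big_cons !big_nil.
Qed.

Lemma aZ_bialg : is_bialgebra aZ z.
Proof.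
move=> t [|t1 t2 p q|t1 t2 t3|t1 t2|t0|t1 t2 t3 p|t1 t2 t3 p q|t1 t2 p|t0 p q].
- by rewrite zinvK.
  rewrite z_app /bialg_rhs /=.
  case: (zQ p) => [d|f] /=; rewrite Bmap_Bdist; congr Bdist.
    by rewrite fdist_map_comp.
  by rewrite fdist_map_dirac.
- by rewrite zinvK.
- by rewrite zinvK.
- by rewrite zinvK.
- by rewrite zinvK.
- by rewrite zinvK.
- by rewrite zinvK.
- rewrite zinvK /bialg_rhs /= Bmap_Bdist; congr Bdist.
  by rewrite fhalf_map.
Qed.
Arguments z : clear implicits.
Arguments Bdist : clear implicits.

Definition relB (h : smap muS Z) (t : ty) : B muS muS t -> B Z Z t -> Prop :=
  match t return B muS muS t -> B Z Z t -> Prop with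
  | tunit => fun b c => match b, c with
      | inl d, inl d' => d' = fdist_map (h tunit) d
      | inr _, inr _ => True
      | _, _ => False end
  | tarr t1 t2 => fun b c => match b, c with
      | inl d, inl d' => d' = fdist_map (h (tarr t1 t2)) d
      | inr f, inr g => forall u, g (h t1 u) = h t2 (f u)
      | _, _ => False end
  end.

Lemma relB_Bdist h t d d' :
  relB h (Bdist muS muS t d) (Bdist Z Z t d') <-> d' = fdist_map (h t) d.
Proof. by case: t d d'. Qed.

Lemma key (h : smap muS Z) : alg_morph iota aZ h ->
  forall t (p : muS t), relB h (gamma p) (z t (h t p)).
Proof.
move=> Hh t p; elim: p =>
  [t0 []| |t1 t2 p IHp q IHq|t1 t2 t3|t1 t2|t0|t1 t2 t3 p _|t1 t2 t3 p _ q _|t1 t2 p _|t0 p _ q _].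
- by rewrite (Hh _ Se) zinvK.
- rewrite (Hh _ (Sapp p q)) /= z_app.
  move: IHp; rewrite /gamma -/gamma /gpost /=.
  case: (gamma p) => [d|f]; case: (zQ (h _ p)) => [d'|g] //= IH.
    rewrite Bmap_Bdist; apply/relB_Bdist; rewrite IH !fdist_map_comp.
    by apply: fdist_map_ext => p'; symmetry; apply: (Hh _ (Sapp p' q)).
  rewrite Bmap_Bdist; apply/relB_Bdist; rewrite !fdist_map_dirac IH //.
- rewrite (Hh _ SS) zinvK /= => u; symmetry; exact: (Hh _ (SS1 u)).
- rewrite (Hh _ SK) zinvK /= => u; symmetry; exact: (Hh _ (SK1 t2 u)).
- by rewrite (Hh _ SI) zinvK /=.
- rewrite (Hh _ (SS1 p)) zinvK /= => u; symmetry; exact: (Hh _ (SS2 p u)).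
- rewrite (Hh _ (SS2 p q)) zinvK /= => u.
  rewrite (Hh _ (Sapp _ _)) /= (Hh _ (Sapp p u)) (Hh _ (Sapp q u)) //.
- by rewrite (Hh _ (SK1 t2 p)) zinvK /=.
- rewrite (Hh _ (Splus p q)) zinvK /gamma -/gamma /gpost /= Bmap_Bdist.
  by apply/relB_Bdist; rewrite !fhalf_map.
Qed.

Theorem theorem5p4 :
  exists (Z : sset) (z : smap Z (B Z Z)),
    locally_final z /\
    (forall (Z' : sset) (z' : smap Z' (B Z' Z')),
        locally_final z' -> coalg_iso z z') /\
    (exists a : alg Z,
        is_bialgebra a z /\
        (forall h : smap muS Z, alg_morph iota a h ->
           forall (t : ty) (p q : muS t), h t p = h t q -> pbisim p q)).
Proof.
exists Z, z; split; first exact: z_lf.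
split; first by move=> Z' z' H; apply: lf_iso => //; exact: z_lf.
exists aZ; split; first exact: aZ_bialg.
move=> h Hh t p q Epq.
exists (fun t p q => h t p = h t q); split => //.
split.
  by move=> t0; split; [by [] | by move=> x y -> | by move=> x y w -> ->].
move=> t0 p0 q0 E.
have K1 := key Hh p0; have K2 := key Hh q0; rewrite E in K1.
case: t0 p0 q0 E K1 K2 => [|t1 t2] p0 q0 E /=;
  case: (gamma p0) => [d1|u1]; case: (gamma q0) => [d2|u2];
  case: (zQ (h _ q0)) => [c|v] //=.
- move=> K1 K2 C [x ->].
  have := congr1 (fun d => fprob d [set y | h _ x = y]) (etrans (esym K1) K2).
  by [].
- by case: u1; case: u2.
- move=> K1 K2 C [x ->].
  have := congr1 (fun d => fprob d [set y | h _ x = y]) (etrans (esym K1) K2).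
  by [].
- by move=> K1 K2 u; rewrite -K1 -K2.
Qed.
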